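(* Let $d\ge 2$ and let $a_1,a_2,b_1,b_2$ be integers with $0<a_1<b_1\le d$, $0<a_2<b_2\leq d$, $a_1\leq a_2$, $b_1\leq b_2$, and $(a_1,b_1)\neq(a_2,b_2)$. Then $\ell_d^{(a_1,b_1)}(n)\geq \ell_d^{(a_2,b_2)}(n)$ for all $n\geq 1$, and $$\lim_{n\to\infty}\left(\ell_d^{(a_1,b_1)}(n)-\ell_d^{(a_2,b_2)}(n)\right)=+\infty.$$
   Context: A partition is a finite nonincreasing sequence of positive integers (its parts); its size is not fixed. The perimeter of a partition with largest part $\alpha$ and $\lambda$ parts is $\alpha+\lambda-1$. For $0<a<b\le d$, $\ell_d^{(a,b)}(n)$ is the number of partitions of perimeter $n$ all of whose parts are congruent to $a$ or $b$ modulo $d$. *)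

(* Defs.v *)
From mathcomp Require Import all_boot all_algebra.
Set Implicit Arguments. Unset Strict Implicit. Unset Printing Implicit Defensive.

Definition is_partition (s : seq nat) : bool :=
  all (fun x => 0 < x) s && sorted (fun x y => y <= x) s.

(* perimeter = largest part + number of parts - 1; only defined for nonempty partitions,
   for which the largest part is the head. *)
Definition perimeter (s : seq nat) : nat := head 0 s + size s - 1.

Definition parts_ab (d a b : nat) (s : seq nat) : bool :=
  all (fun x => (x == a %[mod d]) || (x == b %[mod d])) s.

Definition counted (d a b n : nat) (s : seq nat) : bool :=
  [&& s != [::], is_partition s, perimeter s == n & parts_ab d a b s].

(* A partition of perimeter n has at most n parts, each at most n, so it is
   represented exactly once as a k-tuple of elements of 'I_n.+1 for some k <= n. *)
Definition ell (d a b n : nat) : nat :=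
  \sum_(k < n.+1) #|[set t : k.-tuple 'I_n.+1 | counted d a b n (map val t)]|.

(* Main.v *)
Require Import Defs.
From mathcomp Require Import all_boot all_algebra zify.
Set Implicit Arguments. Unset Strict Implicit.


Definition Lk n k : seq (seq nat) :=
  [seq map val (t : k.-tuple 'I_n.+1) | t <- enum [set: k.-tuple 'I_n.+1]].
Definition U n : seq (seq nat) := flatten [seq Lk n k | k <- iota 0 n.+1].

Lemma card_count (T : finType) (P : pred T) : #|[set t | P t]| = count P (enum [set: T]).
Proof. rewrite cardsE cardE enum_setT -size_filter. rewrite /enum_mem. done. Qed.

Lemma ellE_gen (P : seq nat -> bool) n :
  \sum_(k < n.+1) #|[set t : k.-tuple 'I_n.+1 | P (map val t)]| = count P (U n).
Proof.
rewrite /U count_flatten sumnE big_map big_map.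
transitivity (\sum_(0 <= k < n.+1) count P (Lk n k)); last by rewrite /index_iota subn0.
rewrite big_mkord.
apply: eq_bigr => k _; by rewrite card_count /Lk count_map.
Qed.

Lemma memLk n k s : (s \in Lk n k) = (size s == k) && all (fun x => x <= n) s.
Proof.
apply/idP/idP.
- case/mapP => t _ ->; rewrite size_map size_tuple eqxx /=.
  by apply/allP => x /mapP [y _ ->]; rewrite -ltnS ltn_ord.
- case/andP => /eqP Hs Ha. apply/mapP.
  have Hsz : size (map (fun x => @inord n x) s) == k by rewrite size_map Hs.
  exists (Tuple Hsz); first by rewrite mem_enum inE.
  rewrite /= -map_comp -[LHS]map_id; apply/eq_in_map => x Hx /=.
  by rewrite inordK // ltnS (allP Ha).
Qed.

Lemma memU n s : (s \in U n) = (size s <= n) && all (fun x => x <= n) s.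
Proof.
apply/flatten_mapP/idP.
- case=> k; rewrite mem_iota add0n ltnS => /andP [_ Hk]; rewrite memLk => /andP [/eqP -> ->].
  by rewrite Hk.
- case/andP => Hs Ha; exists (size s); first by rewrite mem_iota add0n ltnS.
  by rewrite memLk eqxx.
Qed.

Lemma Lk_uniq n k : uniq (Lk n k).
Proof.
rewrite map_inj_uniq ?enum_uniq // => t1 t2 H.
apply: val_inj; apply: (inj_map val_inj); exact H.
Qed.

Lemma U_uniq n : uniq (U n).
Proof.
rewrite /U; elim: n.+1 => [|m IH] //.
rewrite -addn1 iotaD map_cat flatten_cat cat_uniq IH /= cats0 Lk_uniq andbT.
apply/hasPn => s; rewrite memLk => /andP [/eqP Hs _].
apply/negP => /flatten_mapP [k]; rewrite mem_iota add0n => Hk; rewrite memLk.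
case/andP => /eqP E _; move: Hk Hs; rewrite E; lia.
Qed.
Definition alw d a b x := (x == a %[mod d]) || (x == b %[mod d]).
Definition phi d a1 b1 a2 b2 x := if x == a2 %[mod d] then x - a2 + a1 else x - b2 + b1.

Lemma repA d a x (ad : a < d) : x == a %[mod d] -> x = a + x %/ d * d.
Proof. move=> /eqP H; rewrite {1}(divn_eq x d) H modn_small //; lia. Qed.

Lemma repB d b x (b0 : 0 < b) (bd : b <= d) (x0 : 0 < x) : x == b %[mod d] -> exists j, x = b + j * d.
Proof.
move=> /eqP H; case: (ltnP b d) => bd'.
  by exists (x %/ d); rewrite {1}(divn_eq x d) H modn_small // addnC.
have E : b = d by apply/eqP; rewrite eqn_leq bd bd'.
move: H; rewrite E modnn => H.
exists (x %/ d).-1; move: x0; rewrite {1 2}(divn_eq x d) H addn0.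
case: (x %/ d) => [|q] //= _; rewrite mulSn; done.
Qed.

Lemma modA d a i : a + i * d == a %[mod d].
Proof. by rewrite addnC modnMDl. Qed.

Lemma phi_cases d a1 b1 a2 b2 x :
  a2 < b2 -> b2 <= d -> 0 < a2 -> 0 < x -> alw d a2 b2 x ->
  (exists i, x = a2 + i * d /\ phi d a1 b1 a2 b2 x = a1 + i * d) \/
  (exists j, x = b2 + j * d /\ phi d a1 b1 a2 b2 x = b1 + j * d).
Proof.
move=> ab bd a0 x0; rewrite /alw /phi; case: ifP => [Ha _ | Ha /= Hb].
  left; have E := repA (leq_trans ab bd) Ha; move: E; move: (x %/ d) => q E; exists q; split => //; lia.
have [j E] := repB (ltn_trans a0 ab) bd x0 Hb; right; exists j; split => //; lia.
Qed.

Lemma phi_lt d a1 b1 a2 b2 x y :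
  0 < a1 -> a1 < b1 -> b1 <= d -> 0 < a2 -> a2 < b2 -> b2 <= d -> a1 <= a2 -> b1 <= b2 ->
  0 < x -> 0 < y -> alw d a2 b2 x -> alw d a2 b2 y -> x < y ->
  phi d a1 b1 a2 b2 x < phi d a1 b1 a2 b2 y.
Proof.
move=> ? ? ? a0 ab bd ? ? x0 y0 Hx Hy xy.
case: (phi_cases a1 b1 ab bd a0 x0 Hx) => [[i [Ex Px]]|[i [Ex Px]]];
case: (phi_cases a1 b1 ab bd a0 y0 Hy) => [[j [Ey Py]]|[j [Ey Py]]];
rewrite Px Py; move: xy; rewrite Ex Ey;
(case: (ltngtP i j) => ij; [have := leq_mul2r d i.+1 j; rewrite ij orbT mulSn | 
   have := leq_mul2r d j.+1 i; rewrite ij orbT mulSn | rewrite ij]); lia.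
Qed.

Lemma phi_bounds d a1 b1 a2 b2 x :
  0 < a1 -> a1 < b1 -> b1 <= d -> 0 < a2 -> a2 < b2 -> b2 <= d -> a1 <= a2 -> b1 <= b2 ->
  0 < x -> alw d a2 b2 x ->
  [/\ a1 <= phi d a1 b1 a2 b2 x, phi d a1 b1 a2 b2 x <= x & alw d a1 b1 (phi d a1 b1 a2 b2 x)].
Proof.
move=> ? ? ? a0 ab bd ? ? x0 Hx.
case: (phi_cases a1 b1 ab bd a0 x0 Hx) => [[i [Ex Px]]|[i [Ex Px]]]; rewrite Px;
  (split; [lia | lia | by rewrite /alw modA ?orbT]).
Qed.

Definition hyp d a1 b1 a2 b2 :=
  [/\ 0 < a1, a1 < b1, b1 <= d, 0 < a2 & a2 < b2] /\ [/\ b2 <= d, a1 <= a2 & b1 <= b2].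

Definition pos x := 0 < x.
Definition goodx d a b x := (0 < x) && alw d a b x.

Lemma phi_ltH d a1 b1 a2 b2 x y : hyp d a1 b1 a2 b2 ->
  goodx d a2 b2 x -> goodx d a2 b2 y -> x < y -> phi d a1 b1 a2 b2 x < phi d a1 b1 a2 b2 y.
Proof. move=> [[? ? ? ? ?] [? ? ?]] /andP [? ?] /andP [? ?]; exact: phi_lt. Qed.

Lemma phi_leH d a1 b1 a2 b2 x y : hyp d a1 b1 a2 b2 ->
  goodx d a2 b2 x -> goodx d a2 b2 y -> x <= y -> phi d a1 b1 a2 b2 x <= phi d a1 b1 a2 b2 y.
Proof.
move=> H gx gy; rewrite leq_eqVlt => /orP [/eqP -> //|xy].
exact/ltnW/(phi_ltH H).
Qed.

Lemma phi_injH d a1 b1 a2 b2 x y : hyp d a1 b1 a2 b2 ->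
  goodx d a2 b2 x -> goodx d a2 b2 y -> phi d a1 b1 a2 b2 x = phi d a1 b1 a2 b2 y -> x = y.
Proof.
move=> H gx gy E; case: (ltngtP x y) => // xy.
  by have := phi_ltH H gx gy xy; rewrite E ltnn.
by have := phi_ltH H gy gx xy; rewrite E ltnn.
Qed.

Lemma phi_bH d a1 b1 a2 b2 x : hyp d a1 b1 a2 b2 -> goodx d a2 b2 x ->
  [/\ a1 <= phi d a1 b1 a2 b2 x, phi d a1 b1 a2 b2 x <= x & alw d a1 b1 (phi d a1 b1 a2 b2 x)].
Proof. move=> [[? ? ? ? ?] [? ? ?]] /andP [? ?]; exact: phi_bounds. Qed.

Definition F d a1 b1 a2 b2 (p : seq nat) :=
  map (phi d a1 b1 a2 b2) p ++ nseq (head 0 p - phi d a1 b1 a2 b2 (head 0 p)) a1.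

Lemma counted_inv d a b n p : counted d a b n p ->
  exists h t, p = h :: t /\ [/\ all (goodx d a b) (h :: t),
     path (fun x y => y <= x) h t & h + size t = n].
Proof.
case: p => [|h t] //; rewrite /counted /is_partition /perimeter /parts_ab /=.
case/and4P => /andP [/andP [h0 tp] st] /eqP per ha ta.
exists h, t; split => //; split => //; last by lia.
rewrite /goodx h0 /= -[alw d a b h]/(_ || _) ha /=; apply/allP => x xt.
by rewrite (allP tp x xt); have := allP ta x xt.
Qed.

Lemma counted_intro d a b n h t :
  all (goodx d a b) (h :: t) -> path (fun x y => y <= x) h t -> h + size t = n ->
  counted d a b n (h :: t).
Proof.
move=> ag pt per; rewrite /counted /is_partition /perimeter /parts_ab /=.
have g x : x \in h :: t -> (0 < x) && alw d a b x by move=> xi; exact: (allP ag x xi).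
apply/and4P; split => //.
- rewrite pt andbT; change (all (fun x => 0 < x) (h :: t)); apply/allP => x xi; by case/andP: (g x xi).
- apply/eqP; lia.
- by case/andP: (g h (mem_head _ _)).
- apply/allP => x xi; have := g x; rewrite inE xi orbT => /(_ isT) /andP [_]; done.
Qed.

Lemma path_phi d a1 b1 a2 b2 h t : hyp d a1 b1 a2 b2 ->
  all (goodx d a2 b2) (h :: t) -> path (fun x y => y <= x) h t ->
  path (fun x y => y <= x) (phi d a1 b1 a2 b2 h) (map (phi d a1 b1 a2 b2) t).
Proof.
move=> H; elim: t h => [|x t IH] h //= /and3P [gh gx gt] /andP [xh pt].
rewrite (phi_leH H gx gh xh) /=; apply: IH => //; by rewrite /= gx.
Qed.

Lemma path_nseq c L a : a <= c -> path (fun x y => y <= x) c (nseq L a).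
Proof. elim: L c => [|L IH] c //= ac; rewrite ac /=; exact: IH. Qed.

Lemma F_counted d a1 b1 a2 b2 n p : hyp d a1 b1 a2 b2 ->
  counted d a2 b2 n p -> counted d a1 b1 n (F d a1 b1 a2 b2 p).
Proof.
move=> H /counted_inv [h [t [-> [ag pt per]]]].
have gh : goodx d a2 b2 h by case/andP: ag.
have [ph1 ph2 ph3] := phi_bH H gh.
have a10 : 0 < a1 by case: H => [[]].
rewrite /F /=; apply: counted_intro.
- have ga1 : goodx d a1 b1 a1 by rewrite /goodx a10 /alw eqxx.
  apply/allP => y; rewrite inE mem_cat => /orP [/eqP -> | /orP [/mapP [x xt ->] | /nseqP [-> _]]] //.
  + by rewrite /goodx (leq_trans a10 ph1) ph3.
  + have gx : goodx d a2 b2 x by apply: (allP ag); rewrite inE xt orbT.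
    have [? ? ?] := phi_bH H gx; rewrite /goodx (leq_trans a10) //.
- rewrite cat_path path_phi //= last_map; apply: path_nseq.
  have gl : goodx d a2 b2 (last h t) by apply: (allP ag); exact: mem_last.
  by case: (phi_bH H gl).
- rewrite size_cat size_map size_nseq; lia.
Qed.

Lemma F_inj d a1 b1 a2 b2 n p q : hyp d a1 b1 a2 b2 ->
  counted d a2 b2 n p -> counted d a2 b2 n q ->
  F d a1 b1 a2 b2 p = F d a1 b1 a2 b2 q -> p = q.
Proof.
move=> H /counted_inv [h [t [-> [ag pt per]]]] /counted_inv [h' [t' [-> [ag' pt' per']]]].
rewrite /F /= => [[E1 E2]].
have hh : h = h'.
  apply: (phi_injH H) => //; [by case/andP: ag | by case/andP: ag'].
subst h'.
have st : size t = size t' by lia.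
have := congr1 (take (size t)) E2; rewrite take_size_cat ?size_map //.
rewrite st take_size_cat ?size_map // => Em.
congr (_ :: _).
elim: t t' st Em ag ag' {pt pt' per per' E2} => [|x t IH] [|x' t'] //= [st] [Ex Et].
move=> /and3P [gh gx gt] /and3P [_ gx' gt'].
rewrite (phi_injH H gx gx' Ex); congr (_ :: _); apply: IH => //=;
  by rewrite ?gh ?gt ?gt'.
Qed.

Lemma counted_U d a b n s : counted d a b n s -> s \in U n.
Proof.
move/counted_inv => [h [t [-> [ag pt per]]]].
have h0 : 0 < h by case/andP: ag => /andP [].
rewrite memU /=; apply/andP; split; first by lia.
rewrite (_ : h <= n) /=; last by lia.
have tr : transitive (fun x y : nat => y <= x).
  by move=> x y z yx zy; exact: leq_trans zy yx.
have := order_path_min tr pt => /allP al; apply/allP => x xt.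
have := al x xt => /= xh; lia.
Qed.

Lemma last_nseqS y k (a : nat) : last y (nseq k.+1 a) = a.
Proof. elim: k y => [|k IH] y; first done. exact: IH. Qed.

Lemma exists_h0 d a1 b1 a2 b2 : hyp d a1 b1 a2 b2 -> (a1, b1) != (a2, b2) ->
  exists h0, [/\ goodx d a2 b2 h0, phi d a1 b1 a2 b2 h0 < h0 & b1 < phi d a1 b1 a2 b2 h0].
Proof.
move=> [[? ? ? ? ?] [? ? ?]] ne; rewrite /phi.
case: (ltnP a1 a2) => aa.
  exists (a2 + d); rewrite modnDr eqxx /goodx /alw modnDr eqxx /=; split => //; lia.
have ea : a1 = a2 by lia.
have bb : b1 < b2.
  rewrite ltn_neqAle andbC /= (_ : b1 <= b2) //=; apply/eqP => eb; move: ne; by rewrite ea eb eqxx.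
have nm : (b2 + d == a2 %[mod d]) = false.
  rewrite modnDr (modn_small (_ : a2 < d)); last by lia.
  case: (ltnP b2 d) => bd'; first by rewrite modn_small //; apply/negbTE; lia.
  have -> : b2 = d by lia.
  by rewrite modnn; apply/negbTE; lia.
exists (b2 + d); rewrite nm /goodx /alw modnDr eqxx orbT /=; split => //; lia.
Qed.

Definition W c m b1 : seq (seq nat) := [seq c :: (nseq i c ++ nseq (m - i) b1) | i <- iota 0 m].

Lemma main_ineq d a1 b1 a2 b2 : hyp d a1 b1 a2 b2 -> (a1, b1) != (a2, b2) ->
  exists c, forall n, count (counted d a2 b2 n) (U n) + (n - c) <= count (counted d a1 b1 n) (U n).
Proof.
move=> H ne; have [h0 [g0 lt0 gt0]] := exists_h0 H ne.
set c := phi d a1 b1 a2 b2 h0; exists c => n.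
have gtc : b1 < c := gt0. have ltc : c < h0 := lt0.
have [c1 _ c3] := phi_bH H g0.
have Hb1 : goodx d a1 b1 b1.
  by case: H => [[? ? ? ? ?] _]; rewrite /goodx /alw eqxx orbT; lia.
have Hc : goodx d a1 b1 c by rewrite /goodx c3; lia.
have Wc : forall w, w \in W c (n - c) b1 -> counted d a1 b1 n w.
  move=> w /mapP [i]; rewrite mem_iota add0n => /andP [_ im] ->.
  apply: counted_intro.
  - apply/allP => y; rewrite inE mem_cat => /orP [/eqP -> | /orP [/nseqP [-> _]|/nseqP [-> _]]] //.
  - rewrite cat_path path_nseq //=.
    case: i im => [|i] im; first by apply: path_nseq => /=; lia.
    by rewrite last_nseqS; apply: path_nseq; lia.
  - rewrite size_cat !size_nseq; lia.
set s1 := map (F d a1 b1 a2 b2) (filter (counted d a2 b2 n) (U n)) ++ W c (n - c) b1.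
have -> : count (counted d a2 b2 n) (U n) + (n - c) = size s1.
  by rewrite size_cat size_map size_filter size_map size_iota.
rewrite -size_filter; apply: uniq_leq_size.
- rewrite cat_uniq; apply/and3P; split.
  + rewrite map_inj_in_uniq ?filter_uniq ?U_uniq // => p q.
    rewrite !mem_filter => /andP [cp _] /andP [cq _]; exact: F_inj H cp cq.
  + apply/hasPn => w wW; apply/negP => /mapP [p]; rewrite mem_filter => /andP [cp _] Ew.
    move: wW; rewrite Ew => /mapP [i]; rewrite mem_iota add0n => /andP [_ im].
    have [h [t [ep [ag _ _]]]] := counted_inv cp; rewrite ep /F /=.
    move=> E; have E1 : phi d a1 b1 a2 b2 h = c by case: E.
    have hh : h = h0 by apply: (phi_injH H) => //; case/andP: ag.
    move: E => /(congr1 (last 0)) /=.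
    rewrite !last_cat hh.
    have -> : h0 - c = (h0 - c).-1.+1 by lia.
    have -> : n - c - i = (n - c - i).-1.+1 by lia.
    rewrite !last_nseqS => eab.
    by case: H => [[_ ab _ _ _] _]; move: ab; rewrite eab ltnn.
  + rewrite map_inj_in_uniq ?iota_uniq // => i j _ _ E.
    have := congr1 (count (pred1 c)) E; rewrite /= eqxx /= !count_cat !count_nseq /=.
    have -> : (b1 == c) = false by apply/negbTE; lia.
    rewrite ?mul0n ?addn0 ?mul1n ?muln1; lia.
- move=> w; rewrite mem_cat mem_filter => /orP [/mapP [p] | wW].
  + rewrite mem_filter => /andP [cp _] ->.
    have cF := F_counted H cp; by rewrite cF (counted_U cF).
  + by have cw := Wc w wW; rewrite cw (counted_U cw).
Qed.

Lemma ellE d a b n : ell d a b n = count (counted d a b n) (U n).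
Proof. exact: ellE_gen. Qed.

Theorem proposition1p4 (d a1 b1 a2 b2 : nat) :
  2 <= d ->
  0 < a1 -> a1 < b1 -> b1 <= d ->
  0 < a2 -> a2 < b2 -> b2 <= d ->
  a1 <= a2 -> b1 <= b2 -> (a1, b1) != (a2, b2) ->
  (forall n, 1 <= n -> ell d a2 b2 n <= ell d a1 b1 n) /\
  (forall M : int, exists N : nat, forall n : nat, N <= n ->
     (M <= (ell d a1 b1 n)%:Z - (ell d a2 b2 n)%:Z)%R).
Proof.
move=> _ ? ? ? ? ? ? ? ? ne.
have H : hyp d a1 b1 a2 b2 by split; split.
have [c Hc] := main_ineq H ne.
split.
  move=> n _; rewrite !ellE; have := Hc n; lia.
move=> M; exists (absz M + c) => n Hn; rewrite !ellE; have := Hc n; lia.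
Qed.
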